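(* Let $(X,\Sigma)$ be a measurable space, $p$ a transition function on it with associated operator $A$ on $ba(X,\Sigma)$, and let $K=\{\mu_1,\dots,\mu_m\}$ be a finitely additive cycle of measures of $A$. If at least one cyclic measure $\mu_i$ is countably additive, then all cyclic measures $\mu_1,\dots,\mu_m$ and the mean measure $\frac1m\sum_{k=1}^m\mu_k$ are countably additive.
   Context: $X$ is an arbitrary infinite set and $\Sigma$ a $\sigma$-algebra of subsets of $X$ containing all one-point sets. $ba(X,\Sigma)$ denotes the space of bounded finitely additive real-valued measures on $\Sigma$. A transition function is a map $p(x,E)$, $x\in X$, $E\in\Sigma$, with $0\le p(x,E)\le 1$, $p(x,X)=1$, $p(\cdot,E)$ bounded $\Sigma$-measurable for every $E$, and $p(x,\cdot)$ countably additive for every $x$. The Markov operator is $A\mu(E)=\int_X p(x,E)\,\mu(dx)$ for $\mu\in ba(X,\Sigma)$. A cycle of measures of $A$ is a finite numbered set $K=\{\mu_1,\dots,\mu_m\}$ of pairwise different positive finitely additive measures with $A\mu_i=\mu_{i+1}$ ($1\le i\le m-1$) and $A\mu_m=\mu_1$; its mean measure is $\frac1m\sum_{k=1}^m\mu_k$. *)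

(* Defs.v *)
From HB Require Import structures.
From mathcomp Require Import all_boot all_order all_algebra.
From mathcomp Require Import all_classical all_reals all_analysis.
Set Implicit Arguments.
Unset Strict Implicit.
Unset Printing Implicit Defensive.
Import Order.TTheory GRing.Theory Num.Theory.
Import numFieldNormedType.Exports.
Local Open Scope classical_set_scope.
Local Open Scope ring_scope.

Section Defs.
Context {d : measure_display} {X : measurableType d} {R : realType}.

Definition fin_additive (mu : set X -> R) : Prop :=
  forall A B, measurable A -> measurable B -> A `&` B = set0 ->
    mu (A `|` B) = mu A + mu B.

(* positive finitely additive measure (automatically bounded by mu setT) *)
Definition pos_fa_measure (mu : set X -> R) : Prop :=
  fin_additive mu /\ forall A, measurable A -> 0 <= mu A.

Definition count_additive (mu : set X -> R) : Prop :=
  forall F : nat -> set X, (forall n, measurable (F n)) ->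
    trivIset setT F ->
    (fun n => \sum_(i < n) mu (F i)) @ \oo --> mu (\bigcup_n F n).

Definition transition_function (p : X -> set X -> R) : Prop :=
  [/\ forall x E, measurable E -> 0 <= p x E <= 1,
      forall x, p x setT = 1,
      forall E, measurable E -> measurable_fun setT (fun x => p x E)
                 /\ exists M : R, forall x, `|p x E| <= M &
      forall x, count_additive (p x)].

Definition meas_partition (n : nat) (E : nat -> set X) : Prop :=
  [/\ forall i, (i < n)%N -> measurable (E i),
      forall i j, (i < n)%N -> (j < n)%N -> i <> j -> E i `&` E j = set0 &
      \bigcup_(i in `I_n) E i = setT].

Definition lower_sum (f : X -> R) (mu : set X -> R) (n : nat)
  (E : nat -> set X) : R :=
  \sum_(i < n) inf (f @` E i) * mu (E i).

(* Integral of a bounded measurable function against a positive finitely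
   additive measure: supremum of lower sums over finite measurable
   partitions (Darboux-type definition of the finitely additive integral). *)
Definition fa_integral (f : X -> R) (mu : set X -> R) : R :=
  sup [set s | exists n E, meas_partition n E /\ s = lower_sum f mu n E].

Definition markov_op (p : X -> set X -> R) (mu : set X -> R) : set X -> R :=
  fun E => fa_integral (fun x => p x E) mu.

Definition meas_eq (mu nu : set X -> R) : Prop :=
  forall E, measurable E -> mu E = nu E.

Definition measure_cycle (p : X -> set X -> R) (m : nat)
  (mu : nat -> set X -> R) : Prop :=
  [/\ (0 < m)%N,
      forall i, (i < m)%N -> pos_fa_measure (mu i),
      forall i j, (i < m)%N -> (j < m)%N -> i <> j -> ~ meas_eq (mu i) (mu j),
      forall i, (i.+1 < m)%N -> meas_eq (markov_op p (mu i)) (mu i.+1) &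
      meas_eq (markov_op p (mu m.-1)) (mu 0%N)].

Definition mean_measure (m : nat) (mu : nat -> set X -> R) : set X -> R :=
  fun E => (m%:R)^-1 * \sum_(k < m) mu k E.

End Defs.

(* Main.v *)
Require Import Defs.
From HB Require Import structures.
From mathcomp Require Import all_boot all_order all_algebra.
From mathcomp Require Import all_classical all_reals all_analysis.
Import Order.TTheory GRing.Theory Num.Theory.
Import numFieldNormedType.Exports.
Local Open Scope classical_set_scope.
Local Open Scope ring_scope.

Section Aux.
Context {d : measure_display} {X : measurableType d} {R : realType}.
Implicit Types (mu : set X -> R).
Set Implicit Arguments.

Lemma fa0 mu : fin_additive mu -> mu set0 = 0.
Proof.
move=> h; have := h set0 set0 measurable0 measurable0 (setI0 _).
rewrite setU0 => e.
have : mu set0 + mu set0 = mu set0 + 0 by rewrite addr0 -e.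
by move/addrI.
Qed.

Lemma faD mu A B : fin_additive mu -> measurable A -> measurable B ->
  A `<=` B -> mu (B `\` A) = mu B - mu A.
Proof.
move=> h mA mB AB.
have e := h A (B `\` A) mA (measurableD mB mA).
rewrite setDUK // in e.
rewrite e; first by rewrite addrC addKr.
by apply/seteqP; split => x //= [ax [_ nax]].
Qed.

Lemma fa_le mu A B : pos_fa_measure mu -> measurable A -> measurable B ->
  A `<=` B -> mu A <= mu B.
Proof.
move=> [h p] mA mB AB; rewrite -subr_ge0 -faD //.
by apply: p; exact: measurableD.
Qed.

Lemma fa_partition mu n E G : pos_fa_measure mu -> meas_partition n E ->
  measurable G -> \sum_(i < n) mu (E i `&` G) = mu G.
Proof.
move=> [h p] [mE dE cE] mG.
suff: forall k, (k <= n)%N ->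
   \sum_(i < k) mu (E i `&` G) = mu ((\bigcup_(i in `I_k) E i) `&` G).
  by move/(_ n (leqnn n)); rewrite cE setTI.
elim=> [|k IH] kn.
  rewrite big_ord0.
  have -> : \bigcup_(i in `I_0) E i = set0.
    by apply/seteqP; split => x //= [i].
  by rewrite set0I fa0.
rewrite big_ord_recr /= IH; last exact: ltnW.
have -> : \bigcup_(i in `I_k.+1) E i = \bigcup_(i in `I_k) E i `|` E k.
  apply/seteqP; split => x /=.
    move=> [i /= ik Ei]; move: ik; rewrite ltnS leq_eqVlt => /orP[/eqP ik|ik].
      by right; rewrite -ik.
    by left; exists i.
  move=> [[i /= ik Ei]|Ek]; first by exists i => //=; exact: ltnW.
  by exists k => //=.
rewrite setIUl h //.
- apply: measurableI => //; apply: bigcup_measurable => i /= ik.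
  by apply: mE; exact: (ltn_trans ik).
- by apply: measurableI => //; exact: mE.
apply/seteqP; split => x //= [[[i /= ik Ei] _] [Ek _]].
have : E i `&` E k = set0.
  apply: dE => //; [exact: (ltn_trans ik)|by move=> ik'; rewrite ik' ltnn in ik].
by move/seteqP => [/(_ x) H _]; apply: H.
Qed.

Lemma bigcup_eq0 (F : nat -> set X) : (forall n, F n = set0) -> \bigcup_n F n = set0.
Proof. by move=> h; apply/seteqP; split => x //= [n _]; rewrite h. Qed.

Lemma cvg_uniqR (u : nat -> R) a b :
  u @ \oo --> (a : R) -> u @ \oo --> (b : R) -> a = b.
Proof.
move=> ha hb.
have e1 := cvg_lim (@Rhausdorff R) ha.
have e2 := cvg_lim (@Rhausdorff R) hb.
by rewrite -e1 -e2.
Qed.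

Lemma ca_fa mu : (forall A, measurable A -> 0 <= mu A) -> count_additive mu ->
  pos_fa_measure mu.
Proof.
move=> p ca; split=> //.
have m0 : mu set0 = 0.
  have tr : trivIset setT (fun _ : nat => @set0 X) by move=> i j _ _ [x []].
  have := ca (fun _ => set0) (fun _ => measurable0) tr.
  rewrite bigcup_eq0 //.
  have -> : (fun n => \sum_(i < n) mu set0) = (fun n => mu set0 *+ n).
    by apply: funext => n; rewrite sumr_const card_ord.
  move=> H.
  have H1 : [sequence mu set0 *+ n.+1]_n @ \oo --> mu set0 by rewrite cvg_shiftS.
  have H2 : (fun n => mu set0 *+ n.+1 - mu set0 *+ n) @ \oo --> mu set0 - mu set0.
    exact: cvgB H1 H.
  rewrite subrr in H2.
  have e : (fun n => mu set0 *+ n.+1 - mu set0 *+ n) = fun=> mu set0.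
    by apply: funext => n; rewrite mulrS addrK.
  rewrite e in H2.
  by apply/esym; exact: cvg_uniqR H2 (cvg_cst _).
move=> A B mA mB AB.
pose F := fun n : nat => nth set0 [:: A; B] n.
have mF : forall n, measurable (F n).
  by case=> [|[|n]] //=; rewrite /F /= nth_nil.
have tF : trivIset setT F.
  move=> [|[|i]] [|[|j]] _ _ //=; rewrite /F /= ?nth_nil ?setI0 ?set0I;
    try by case.
  - by rewrite AB; case.
  - by rewrite setIC AB; case.
have UF : \bigcup_n F n = A `|` B.
  apply/seteqP; split => x.
    by case=> [[|[|n]]] _ //=; rewrite /F /= ?nth_nil; [left|right|].
  by case=> h; [exists 0%N|exists 1%N].
have := ca F mF tF; rewrite UF => H.
suff H' : (fun n => \sum_(i < n) mu (F i)) @ \oo --> (mu A + mu B).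
  exact: cvg_uniqR H H'.
apply: cvg_near_cst; near=> n.
have n2 : (2 <= n)%N by near: n; exists 2%N.
rewrite -(subnKC n2) big_split_ord /= 2!big_ord_recl big_ord0 big1 /=; last by move=> i _; rewrite /F /= nth_nil m0.
by rewrite !addr0.
Unshelve. all: by end_near.
Qed.

Lemma decr_le (B : nat -> set X) : (forall n, B n.+1 `<=` B n) ->
  forall i j, (i <= j)%N -> B j `<=` B i.
Proof.
move=> dB i j /subnK <-; elim: (j - i)%N => [|k IH] //=.
by rewrite addSn; exact: (subset_trans (dB _) IH).
Qed.

Lemma cont_above mu (B : nat -> set X) : pos_fa_measure mu -> count_additive mu ->
  (forall n, measurable (B n)) -> (forall n, B n.+1 `<=` B n) ->
  \bigcap_n B n = set0 -> mu (B n) @[n --> \oo] --> 0.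
Proof.
move=> [h p] ca mB dB iB.
have dB' := @decr_le B dB.
pose F k := B k `\` B k.+1.
have mF : forall k, measurable (F k) := fun k => measurableD (mB k) (mB k.+1).
have tF : trivIset setT F.
  move=> i j _ _ [x [[Bi nBi] [Bj nBj]]].
  case: (ltngtP i j) => // ij.
  - by exfalso; apply: nBi; exact: (dB' _ _ ij x Bj).
  - by exfalso; apply: nBj; exact: (dB' _ _ ij x Bi).
have UF : \bigcup_k F k = B 0%N.
  apply/seteqP; split => x.
    by move=> [k _ [Bk _]]; exact: (dB' 0%N k (leq0n k) x Bk).
  move=> B0x.
  have [n nBn] : exists n, ~ B n x.
    apply: contrapT => H.
    have : (\bigcap_n B n) x.
      by move=> n _; apply: contrapT => nb; apply: H; exists n.
    by rewrite iB.
  elim: n nBn => [|n IH] nBn; first by [].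
  have [Bn|nBn'] := pselect (B n x); first by exists n.
  exact: IH.
have ps : forall n, \sum_(i < n) mu (F i) = mu (B 0%N) - mu (B n).
  elim=> [|n IH]; first by rewrite big_ord0 subrr.
  rewrite big_ord_recr /= IH /F (faD h (mB _) (mB _) (dB n)).
  by rewrite addrA subrK.
have := ca F mF tF; rewrite UF.
have -> : (fun n => \sum_(i < n) mu (F i)) = (fun n => mu (B 0%N) - mu (B n)).
  by apply: funext => n; rewrite ps.
move=> H.
have H2 : (fun n => mu (B 0%N) - (mu (B 0%N) - mu (B n))) @ \oo --> mu (B 0%N) - mu (B 0%N).
  exact: cvgB (cvg_cst _) H.
rewrite subrr in H2.
have e : (fun n => mu (B 0%N) - (mu (B 0%N) - mu (B n))) = fun n => mu (B n).
  by apply: funext => n; rewrite opprB addrC subrK.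
by rewrite e in H2.
Qed.


Lemma ca_of_cont mu : pos_fa_measure mu ->
  (forall B : nat -> set X, (forall n, measurable (B n)) ->
     (forall n, B n.+1 `<=` B n) -> \bigcap_n B n = set0 ->
     mu (B n) @[n --> \oo] --> 0) ->
  count_additive mu.
Proof.
move=> [h p] cont F mF tF.
pose G n := \bigcup_(i in `I_n) F i.
have mG n : measurable (G n) by apply: bigcup_measurable => k _.
pose U := \bigcup_n F n.
have mU : measurable U by apply: bigcup_measurable => k _.
have GU n : G n `<=` U by move=> x [i _ Fi]; exists i.
have GS n : G n.+1 = G n `|` F n.
  apply/seteqP; split => x /=.
    move=> [i /= ik Ei]; move: ik; rewrite ltnS leq_eqVlt => /orP[/eqP ik|ik].
      by right; rewrite -ik.
    by left; exists i.
  move=> [[i /= ik Ei]|Ek]; first by exists i => //=; exact: ltnW.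
  by exists n => //=.
have ps n : \sum_(i < n) mu (F i) = mu (G n).
  elim: n => [|n IH].
    rewrite big_ord0.
    have -> : G 0%N = set0 by apply/seteqP; split => x //= [i].
    by rewrite fa0.
  rewrite big_ord_recr /= IH GS h //.
  apply/seteqP; split => x //= [[i /= ik Fi] Fn].
  have := tF i n I I; rewrite /setI => /(_ (ex_intro _ x (conj Fi Fn))) ein.
  by rewrite ein ltnn in ik.
pose B n := U `\` G n.
have HB : mu (B n) @[n --> \oo] --> 0.
  apply: cont.
  - by move=> n; apply: measurableD.
  - by move=> n; rewrite /B GS => x [Ux nG]; split => // Gx; apply: nG; left.
  apply/seteqP; split => x //= Bx.
  have [[k _ Fk] _] := Bx 0%N I.
  have [_ nG] := Bx k.+1 I.
  by apply: nG; rewrite GS; right.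
have e : (fun n => \sum_(i < n) mu (F i)) = (fun n => mu U - mu (B n)).
  apply: funext => n; rewrite ps /B faD //.
  by rewrite opprB addrC subrK.
rewrite e -[X in _ --> X]subr0.
exact: cvgB (cvg_cst _) HB.
Qed.


Lemma integral_bound (f : X -> R) mu (C : set X) (eps : R) :
  pos_fa_measure mu -> (forall x, 0 <= f x <= 1) -> measurable C ->
  0 <= eps -> (forall x, ~ C x -> f x <= eps) ->
  fa_integral f mu <= mu C + eps * mu setT.
Proof.
move=> pm f01 mC eps0 fC.
apply: ge_sup.
  exists (lower_sum f mu 1 (fun=> setT)); exists 1%N, (fun=> setT); split=> //.
  split => //.
  - by move=> i j; rewrite !ltnS !leqn0 => /eqP -> /eqP ->.
  - by apply/seteqP; split => x // _; exists 0%N.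
move=> s [n [E [hE ->]]].
rewrite /lower_sum.
rewrite -(fa_partition C pm hE mC) -(fa_partition setT pm hE measurableT) mulr_sumr -big_split /=.
apply: ler_sum => i _.
rewrite setIT.
case: hE => mE _ _.
have mu0 : 0 <= mu (E i) by apply: pm.2; exact: mE.
have lb : has_lbound (f @` E i) by exists 0 => y [x _ <-]; case/andP: (f01 x).
case: (pselect (E i `<=` C)) => EC.
- rewrite setIidl //.
  have inf1 : inf (f @` E i) <= 1.
    case: (pselect (E i !=set0)) => [[x Ex]|ne].
      apply: (le_trans (ge_inf lb (imageP f Ex))).
      by case/andP: (f01 x).
    have -> : E i = set0 by apply/seteqP; split=> y // Ey; apply: ne; exists y.
    by rewrite image_set0 inf0 ler01.
  apply: (le_trans (ler_wpM2r mu0 inf1)).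
  by rewrite mul1r lerDl mulr_ge0.
- have [x [Ex nCx]] : exists x, E i x /\ ~ C x.
    apply: contrapT => H; apply: EC => y Ey; apply: contrapT => nC.
    by apply: H; exists y.
  have infe : inf (f @` E i) <= eps.
    exact: (le_trans (ge_inf lb (imageP f Ex)) (fC x nCx)).
  apply: (le_trans (ler_wpM2r mu0 infe)).
  rewrite lerDr; apply: pm.2; apply: measurableI => //; exact: mE.
Qed.


Lemma markov_ca p mu nu : transition_function p -> pos_fa_measure mu ->
  count_additive mu -> pos_fa_measure nu -> meas_eq (markov_op p mu) nu ->
  count_additive nu.
Proof.
move=> [p01 p1 pm pca] pmu camu pnu e.
have ppfa x : pos_fa_measure (p x).
  by apply: ca_fa => // A mA; case/andP: (p01 x A mA).
apply: ca_of_cont => // B mB dB iB.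
apply/cvgrPdist_lt => del del0.
pose M := mu setT + 1.
have M0 : 0 < M by rewrite /M ltr_wpDl // pmu.2.
pose eps := del / 2 / M.
have eps0 : 0 < eps by rewrite /eps !divr_gt0.
pose C n := [set x | eps < p x (B n)].
have mC n : measurable (C n).
  have := (pm _ (mB n)).1 measurableT `]eps, +oo[%classic (measurable_itv _).
  rewrite setTI.
  suff -> : (fun x => p x (B n)) @^-1` `]eps, +oo[%classic = C n by [].
  by apply/seteqP; split => x /=; rewrite in_itv /= andbT.
have dC n : C n.+1 `<=` C n.
  move=> x /= h; apply: (lt_le_trans h).
  exact: fa_le (ppfa x) (mB _) (mB _) (dB n).
have iC : \bigcap_n C n = set0.
  apply/seteqP; split => x //= Cx.
  have := cont_above B (ppfa x) (pca x) mB dB iB.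
  move/cvgrPdist_lt => /(_ eps eps0) [N _ HN].
  have := HN N (leqnn N); rewrite sub0r normrN ger0_norm.
    by rewrite ltNge (ltW (Cx N I)).
  by case/andP: (p01 x _ (mB N)).
have muC := cont_above C pmu camu mC dC iC.
move/cvgrPdist_lt : muC => /(_ (del / 2)) muC.
have del20 : 0 < del / 2 by rewrite divr_gt0.
move: (muC del20) => {}muC.
near=> n.
have hC : `|0 - mu (C n)| < del / 2 by near: n.
rewrite sub0r normrN ger0_norm; last by apply: pnu.2.
rewrite -e //.
have bnd := integral_bound (fun x => p x (B n)) (C n) eps pmu (fun x => p01 x _ (mB n)) (mC n) (ltW eps0).
have bnd' : fa_integral (p^~ (B n)) mu <= mu (C n) + eps * mu [set: X].
  by apply: bnd => x nC; rewrite leNgt; apply/negP.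
rewrite /markov_op; apply: (le_lt_trans bnd').
have h1 : mu (C n) < del / 2.
  by rewrite sub0r normrN in hC; exact: le_lt_trans (ler_norm _) hC.
have h3 : eps * M = del / 2 by rewrite /eps divfK // gt_eqF.
have h2 : eps * mu setT <= del / 2.
  rewrite -h3; apply: ler_wpM2l; first exact: ltW.
  by rewrite /M lerDl.
have -> : del = del / 2 + del / 2 by rewrite -splitr.
exact: ltr_leD.
Unshelve. all: by end_near.
Qed.


End Aux.

Lemma cvg_finsum (R : realType) (m : nat) (u : nat -> nat -> R) (l : nat -> R) :
  (forall k, (k < m)%N -> u k n @[n --> \oo] --> l k) ->
  (\sum_(k < m) u k n) @[n --> \oo] --> \sum_(k < m) l k.
Proof.
elim: m => [|m IH] h.
  rewrite big_ord0.
  have -> : (fun n => \sum_(k < 0) u k n) = fun=> 0 by apply: funext => n; rewrite big_ord0.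
  exact: cvg_cst.
rewrite big_ord_recr /=.
have -> : (fun n => \sum_(k < m.+1) u k n) =
   (fun n => \sum_(k < m) u k n + u m n).
  by apply: funext => n; rewrite big_ord_recr.
apply: cvgD; last exact: h.
by apply: IH => k km; apply: h; exact: ltnW.
Qed.

Theorem theorem4p2 (d : measure_display) (X : measurableType d) (R : realType)
  (p : X -> set X -> R) (m : nat) (mu : nat -> set X -> R) :
  infinite_set (@setT X) ->
  (forall x : X, measurable [set x]) ->
  transition_function p ->
  measure_cycle p m mu ->
  (exists2 i, (i < m)%N & count_additive (mu i)) ->
  (forall i, (i < m)%N -> count_additive (mu i)) /\
  count_additive (mean_measure m mu).
Proof.
move=> _ _ tp [m0 pfa _ step last] [i im cai].
have stepS : forall j, (j < m)%N -> count_additive (mu j) ->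
    count_additive (mu (j.+1 %% m)%N).
  move=> j jm ca; case: (ltnP j.+1 m) => h.
    rewrite modn_small //.
    exact: markov_ca tp (pfa j jm) ca (pfa _ h) (step j h).
  have jm1 : j.+1 = m by apply/eqP; rewrite eqn_leq jm h.
  rewrite jm1 modnn.
  apply: markov_ca tp (pfa j jm) ca (pfa 0%N m0) _.
  by have -> : j = m.-1 by rewrite -jm1.
have all : forall k, count_additive (mu ((i + k) %% m)%N).
  elim=> [|k IH]; first by rewrite addn0 modn_small.
  have := stepS _ (ltn_pmod _ m0) IH.
  by rewrite -addn1 modnDml addn1 addnS.
have allj : forall j, (j < m)%N -> count_additive (mu j).
  move=> j jm; have := all (j + m - i)%N.
  rewrite subnKC; last by rewrite (leq_trans (ltnW im)) // leq_addl.
  by rewrite modnDr modn_small.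
split => // F mF tF.
rewrite /mean_measure.
have -> : (fun n => \sum_(i0 < n) (m%:R^-1 * \sum_(k < m) mu k (F i0))) =
   (fun n => m%:R^-1 * \sum_(k < m) \sum_(i0 < n) mu k (F i0)).
  by apply: funext => n; rewrite -mulr_sumr exchange_big.
apply: cvgMl_tmp.
exact: (@cvg_finsum R m (fun k n => \sum_(i0 < n) mu k (F i0))
   (fun k => mu k (\bigcup_n F n)) (fun k km => allj k km F mF tF)).
Qed.
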